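(* Let $C=c_0c_1\dots c_{m-1}c_0$ and $D=(0)(1)\dots(n-1)(0)$ be reflexive digraph cycles with $D$ non-contractible, let $D$ have orientation string $y_1y_2\dots y_n$ and $C$ have orientation string $x_1\dots x_m$, and let $i\in\{1,\dots,n\}$ be such that $\mathrm{Mon}_1(C,D;i)$ is nonempty, with maximum element $\Phi_i^M$. There is a monotone one-step up edge from $\Phi_i^M$ to some map in $\mathrm{Mon}_1(C,D;i+1)$ if and only if $\sigma^i(D)\,y_{i+1} \leq^* C$ (subscripts of $y$ taken mod $n$ in $\{1,\dots,n\}$).
   Context: A digraph is a binary relation $\to$ on a finite vertex set; reflexive means every vertex has a loop. A digraph cycle $C=c_0c_1\dots c_{m-1}c_0$ (indices mod $m$, $m\ge3$) has underlying graph the cycle with edges $c_ic_{i+1}$; $D=(0)(1)\dots(n-1)(0)$ has vertex set the integers mod $n$; $D$ is non-contractible if it has length at least $4$ or is a directed $3$-cycle. The orientation string of $C$ is $x_1\dots x_m$ where $x_k$ is $+$, $-$ or $*$ according as the edge $c_{k-1}c_k$ is a forward arc only, a backward arc only, or symmetric (both directions); similarly $y_k$ describes the edge $(k-1)(k)$ of $D$. The shift $\sigma^i(D)$ is the string $y_{i+1}\dots y_ny_1\dots y_i$; juxtaposition denotes concatenation. For strings $Y=z_1\dots z_p$ and $X=x_1\dots x_q$, $Y\leq^* X$ means there is a strictly increasing $\alpha:\{1,\dots,p\}\to\{1,\dots,q\}$ with $z_j\in\{x_{\alpha(j)},*\}$ for all $j$. A homomorphism $\phi:C\to D$ satisfies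 $u\to v\Rightarrow\phi(u)\to\phi(v)$; $\mathrm{Hom}(C,D)$ is the digraph on homomorphisms with $\phi\to\phi'$ iff $\phi(u)\to\phi'(v)$ for all arcs $u\to v$ of $C$. Under $\phi$, edge $c_{k-1}c_k$ is increasing, stationary or decreasing as $\phi(c_k)-\phi(c_{k-1})$ is $1,0,-1$; the wind is (number of increasing minus decreasing edges)$/n$. $\mathrm{Mon}_1(C,D;i)$ is the set (induced subgraph) of wind-$1$ homomorphisms $\phi$ in which every edge is increasing or stationary and $\phi(c_0)=i$. For such $\phi$ there are exactly $n$ increasing edges $c_{k-1}c_k$, $k\in\{1,\dots,m\}$ (with $c_m=c_0$); list their indices as $\alpha_\phi(1)<\dots<\alpha_\phi(n)$. Order $\mathrm{Mon}_1(C,D;i)$ by $\phi\ge\phi'$ iff $\alpha_\phi(j)\le\alpha_{\phi'}(j)$ for all $j$; $\Phi_i^M$ denotes its maximum element (which exists when the set is nonempty). A monotone one-step up edge from $\phi$ to $\phi'$ (both wind-$1$ homomorphisms with all edges increasing or stationary) means: for some subpath of $C$ with vertex set $S$ all of whose edges are stationary under $\phi$ (so $\phi(S)=\{d\}$), $\phi'$ agrees with $\phi$ off $S$ and maps $S$ to $d+1$. *)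

(* Defs.v *)
From mathcomp Require Import all_boot.
Set Implicit Arguments. Unset Strict Implicit. Unset Printing Implicit Defensive.

(* Orientation symbols: Fwd = '+', Bwd = '-', Sym = '*'. *)
Inductive orient := Fwd | Bwd | Sym.

Definition has_fwd (o : orient) : bool := if o is Bwd then false else true.
Definition has_bwd (o : orient) : bool := if o is Fwd then false else true.

(* A reflexive digraph cycle on vertices 'I_N = {0,..,N-1} (N >= 3) is
   determined by its orientation string s = x_1 ... x_N (a seq of size N):
   x_{k+1} = nth Sym s k describes the edge between vertex k and k+1 (mod N). *)
Definition carc N (s : seq orient) (u v : 'I_N) : bool :=
  [|| u == v,
      (v == ordS u) && has_fwd (nth Sym s u)
    | (u == ordS v) && has_bwd (nth Sym s v)].

Definition noncontractible n (ys : n.-tuple orient) : Prop :=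
  3 <= n /\
  (4 <= n \/ (forall k, k < n -> nth Sym ys k = Fwd)
          \/ (forall k, k < n -> nth Sym ys k = Bwd)).

Section Homs.
Variables (m n : nat) (xs : m.-tuple orient) (ys : n.-tuple orient).

Definition is_hom (phi : 'I_m -> 'I_n) : Prop :=
  forall u v : 'I_m, carc xs u v -> carc ys (phi u) (phi v).

(* Edge e : 'I_m is the edge c_e c_{e+1} (the paper's edge number e+1). *)
Definition inc_edge (phi : 'I_m -> 'I_n) (e : 'I_m) : bool :=
  phi (ordS e) == ordS (phi e).
Definition stat_edge (phi : 'I_m -> 'I_n) (e : 'I_m) : bool :=
  phi (ordS e) == phi e.
Definition dec_edge (phi : 'I_m -> 'I_n) (e : 'I_m) : bool :=
  phi e == ordS (phi (ordS e)).

(* wind = (#increasing - #decreasing) / n; wind 1 stated as #inc = n + #dec (in nat) *)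
Definition wind_one (phi : 'I_m -> 'I_n) : Prop :=
  #|[pred e | inc_edge phi e]| = n + #|[pred e | dec_edge phi e]|.

Definition mon_hom (phi : 'I_m -> 'I_n) : Prop :=
  [/\ is_hom phi, wind_one phi & forall e, inc_edge phi e || stat_edge phi e].

Definition Mon1 (i : nat) (phi : 'I_m -> 'I_n) : Prop :=
  mon_hom phi /\ forall u : 'I_m, val u = 0 -> val (phi u) = i %% n.

Definition alpha (phi : 'I_m -> 'I_n) : seq nat :=
  [seq (val e).+1 | e <- enum 'I_m & inc_edge phi e].

Definition mon_ge (phi phi' : 'I_m -> 'I_n) : Prop :=
  forall j, j < n -> nth 0 (alpha phi) j <= nth 0 (alpha phi') j.

Definition is_max_Mon1 (i : nat) (Phi : 'I_m -> 'I_n) : Prop :=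
  Mon1 i Phi /\ forall phi', Mon1 i phi' -> mon_ge Phi phi'.

(* Subpath of C starting at vertex a with l vertices (1 <= l <= m):
   vertices a, a+1, ..., a+l-1 (mod m); its edges are the edges e with
   e = a + t (mod m), t < l - 1. *)
Definition in_path (a : 'I_m) (l : nat) (u : 'I_m) : bool :=
  (u + m - a) %% m < l.
Definition edge_in_path (a : 'I_m) (l : nat) (e : 'I_m) : bool :=
  (e + m - a) %% m < l.-1.

Definition one_step_up (phi phi' : 'I_m -> 'I_n) : Prop :=
  mon_hom phi /\ mon_hom phi' /\
  exists (a : 'I_m) (l : nat) (d : 'I_n),
    [/\ 0 < l <= m,
        (forall e, edge_in_path a l e -> stat_edge phi e),
        (forall u, in_path a l u -> phi u = d),
        (forall u, in_path a l u -> phi' u = ordS d)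
      & (forall u, ~~ in_path a l u -> phi' u = phi u)].
End Homs.

Definition star_le (Y X : seq orient) : Prop :=
  exists alpha : nat -> nat,
    [/\ forall j1 j2, j1 < j2 < size Y -> alpha j1 < alpha j2,
        forall j, j < size Y -> alpha j < size X
      & forall j, j < size Y ->
          nth Sym Y j = nth Sym X (alpha j) \/ nth Sym Y j = Sym].

(* sigma^i(D) = y_{i+1} ... y_n y_1 ... y_i *)
Definition shift (i : nat) (ys : seq orient) : seq orient := rot i ys.

(* Main.v *)
Require Import Defs.
From mathcomp Require Import all_boot.
From mathcomp Require Import zify.
Set Implicit Arguments. Unset Strict Implicit. Unset Printing Implicit Defensive.


Definition ordn (N : nat) (H : 0 < N) (k : nat) : 'I_N := Ordinal (ltn_pmod k H).

Lemma ordn_val N (H : 0 < N) (x : 'I_N) : ordn H x = x.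
Proof. by apply: val_inj; rewrite /= modn_small. Qed.

Lemma ordS_ordn N (H : 0 < N) k : ordS (ordn H k) = ordn H k.+1.
Proof. by apply: val_inj; rewrite /= -addn1 modnDml addn1. Qed.

Lemma ordSE N (H : 0 < N) (x : 'I_N) : ordS x = ordn H x.+1.
Proof. by apply: val_inj. Qed.

Lemma ordn_eq N (H : 0 < N) a b : (ordn H a == ordn H b) = (a == b %[mod N]).
Proof. by []. Qed.

Lemma ordnDr N (H : 0 < N) a : ordn H (a + N) = ordn H a.
Proof. by apply: val_inj; rewrite /= modnDr. Qed.

Lemma modn_neq N k r : 0 < r < N -> (k + r == k %[mod N]) = false.
Proof.
move=> hr; rewrite -{2}[k]addn0 eqn_modDl mod0n modn_small //; lia.
Qed.

Definition compat (x y : orient) : bool :=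
  (has_fwd x ==> has_fwd y) && (has_bwd x ==> has_bwd y).

Lemma compat_star x y : compat x y -> y = x \/ y = Sym.
Proof. by case: x; case: y; auto. Qed.

Lemma star_compat x y : y = x \/ y = Sym -> compat x y.
Proof. by case: x; case: y => //= -[]. Qed.

Definition cnt (q : nat -> bool) k := count q (iota 0 k).

Lemma cntS q k : cnt q k.+1 = cnt q k + q k.
Proof. by rewrite /cnt -addn1 iotaD count_cat /= addn0. Qed.

Lemma cnt0 q : cnt q 0 = 0. Proof. by []. Qed.

Lemma cnt_mono q a b : a <= b -> cnt q a <= cnt q b.
Proof.
move=> ab; rewrite /cnt -(subnKC ab) iotaD count_cat; lia.
Qed.

Lemma cnt_nth q M j : j < count q (iota 0 M) ->
  cnt q (nth 0 (filter q (iota 0 M)) j) = j.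
Proof.
elim: M j => [|M IH] j //.
rewrite -[M.+1]addn1 iotaD filter_cat count_cat /= add0n.
case qM: (q M) => /=; rewrite ?addn0 ?cats0; last exact: IH.
rewrite nth_cat size_filter addn1 ltnS leq_eqVlt => /orP[/eqP ->|lt].
  by rewrite ltnn subnn.
by rewrite lt IH.
Qed.

Lemma nth_filter_mem q M j : j < count q (iota 0 M) ->
  let x := nth 0 (filter q (iota 0 M)) j in q x /\ x < M.
Proof.
move=> hj x.
have : x \in filter q (iota 0 M) by rewrite mem_nth // size_filter.
by rewrite mem_filter mem_iota => /andP[-> /andP[_]].
Qed.

Lemma nth_rot_mod (T : Type) (x0 : T) (s : seq T) i j : i <= size s -> j < size s ->
  nth x0 (rot i s) j = nth x0 s ((i + j) %% size s).
Proof.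
move=> hi hj; rewrite /rot nth_cat size_drop.
case: ltnP => h.
  by rewrite nth_drop modn_small //; lia.
rewrite nth_take; last lia.
have -> : i + j = (j - (size s - i)) + size s by lia.
by rewrite modnDr modn_small //; lia.
Qed.


Section Homs2.
Variables (m n : nat) (xs : m.-tuple orient) (ys : n.-tuple orient).
Hypotheses (m0 : 0 < m) (n3 : 2 < n).
Hypothesis n0 : 0 < n.

Lemma ordS_neq1 (x : 'I_n) : (x == ordS x) = false.
Proof.
rewrite -(ordn_val n0 x) ordS_ordn ordn_eq eq_sym -addn1 modn_neq //; lia.
Qed.

Lemma ordS_neq2 (x : 'I_n) : (x == ordS (ordS x)) = false.
Proof.
rewrite -(ordn_val n0 x) !ordS_ordn ordn_eq eq_sym -addn2 modn_neq //; lia.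
Qed.

Lemma hom_of_edges (phi : 'I_m -> 'I_n) :
  (forall e : 'I_m, stat_edge phi e ||
     (inc_edge phi e && compat (nth Sym xs e) (nth Sym ys (phi e)))) ->
  is_hom xs ys phi.
Proof.
move=> H u v; rewrite /carc; case/or3P => [/eqP-> | /andP[/eqP-> f] | /andP[/eqP-> b]].
- by rewrite eqxx.
- have := H u; case/orP => [/eqP-> | /andP[/eqP-> /andP[/implyP c _]]].
    by rewrite eqxx.
  by rewrite eqxx (c f) /= orbT.
- have := H v; case/orP => [/eqP-> | /andP[/eqP-> /andP[_ /implyP c]]].
    by rewrite eqxx.
  by rewrite eqxx (c b) /= !orbT.
Qed.

Lemma edge_of_hom (phi : 'I_m -> 'I_n) (e : 'I_m) :
  is_hom xs ys phi -> inc_edge phi e ->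
  compat (nth Sym xs e) (nth Sym ys (phi e)).
Proof.
move=> hom /eqP inc; apply/andP; split; apply/implyP => f.
- have : carc xs e (ordS e) by rewrite /carc eqxx f orbT.
  move/hom; rewrite inc /carc (ordS_neq1 (phi e)) (ordS_neq2 (phi e)) eqxx /=.
  by case/orP=> // /andP[].
- have : carc xs (ordS e) e by rewrite /carc eqxx f !orbT.
  move/hom; rewrite inc /carc eq_sym (ordS_neq1 (phi e)) (ordS_neq2 (phi e)) eqxx /=.
  by [].
Qed.

Lemma card_predE (P : 'I_m -> bool) :
  #|[pred e | P e]| = count (fun k => P (ordn m0 k)) (iota 0 m).
Proof.
rewrite cardE /enum_mem size_filter -enumT -val_enum_ord count_map.
by apply: eq_count => x /=; rewrite ordn_val.
Qed.

Lemma alphaE (phi : 'I_m -> 'I_n) :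
  alpha phi = map succn (filter (fun k => inc_edge phi (ordn m0 k)) (iota 0 m)).
Proof.
rewrite /alpha -val_enum_ord filter_map -map_comp.
congr map; apply: eq_filter => x /=; by rewrite ordn_val.
Qed.

Lemma incstat_excl (phi : 'I_m -> 'I_n) e :
  inc_edge phi e -> stat_edge phi e -> False.
Proof. by rewrite /inc_edge /stat_edge => /eqP-> /eqP/esym/eqP; rewrite ordS_neq1. Qed.

Lemma build (q : nat -> bool) (s : nat) :
  cnt q m = n ->
  (forall e, e < m -> q e -> compat (nth Sym xs e) (nth Sym ys ((s + cnt q e) %% n))) ->
  Mon1 xs ys s (fun u : 'I_m => ordn n0 (s + cnt q u)) /\
  (forall e : 'I_m, inc_edge (fun u : 'I_m => ordn n0 (s + cnt q u)) e = q e).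
Proof.
move=> tot hc; set phi := fun u : 'I_m => _.
have edge : forall e : 'I_m, phi (ordS e) = ordn n0 (s + cnt q e + q e).
  move=> e; rewrite /phi /=; case: (ltnP e.+1 m) => h.
    by rewrite modn_small // cntS addnA.
  have em : e.+1 = m by have := ltn_ord e; lia.
  by rewrite em modnn -addnA -cntS em tot addn0 ordnDr.
have incq : forall e : 'I_m, inc_edge phi e = q e.
  move=> e; rewrite /inc_edge edge /phi ordS_ordn.
  case: (q e); first by rewrite addn1 eqxx.
  by rewrite addn0 ordn_eq eq_sym -addn1 modn_neq //; lia.
have decf : forall e : 'I_m, dec_edge phi e = false.
  move=> e; rewrite /dec_edge edge /phi ordS_ordn ordn_eq -addSn -addnS -addnA.
  have -> : s + ((cnt q e).+1 + q e) = (s + cnt q e) + (q e).+1 by case: (q e); lia.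
  by rewrite eq_sym modn_neq //; case: (q e); lia.
split=> //; split; last first.
  by move=> u u0; rewrite /phi u0 addn0.
split.
- apply: hom_of_edges => e; rewrite incq.
  case qe: (q e); last by rewrite /stat_edge edge qe addn0 eqxx.
  by apply/orP; right; exact: hc (ltn_ord e) qe.
- rewrite /wind_one card_predE.
  have -> : #|[pred e | dec_edge phi e]| = 0 by apply: eq_card0 => e; rewrite !inE decf.
  rewrite addn0 -[RHS]tot /cnt; apply: eq_in_count => k; rewrite mem_iota => /andP[_ hk] /=.
  by rewrite incq /= modn_small.
- move=> e; rewrite incq; case qe: (q e) => //=.
  by rewrite /stat_edge edge qe addn0.
Qed.

Lemma from_mon (phi : 'I_m -> 'I_n) (s : nat) :
  Mon1 xs ys s phi ->
  let q := fun k => inc_edge phi (ordn m0 k) in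
  cnt q m = n /\ forall u : 'I_m, phi u = ordn n0 (s + cnt q u).
Proof.
move=> [[hom wind incst] h0] q; split.
  move: wind; rewrite /wind_one card_predE.
  have -> : #|[pred e | dec_edge phi e]| = 0.
    apply: eq_card0 => e; rewrite !inE /dec_edge.
    case/orP: (incst e) => /eqP ->; first by rewrite ordS_neq2.
    by rewrite ordS_neq1.
  by rewrite addn0.
have key : forall k, k < m -> phi (ordn m0 k) = ordn n0 (s + cnt q k).
  elim=> [|k IH] hk.
    by apply: val_inj; rewrite /= addn0 -(h0 (ordn m0 0)) //= mod0n.
  have Hk : k < m by lia.
  have E0 := IH Hk.
  have := incst (ordn m0 k); rewrite /inc_edge /stat_edge ordS_ordn cntS.
  case/orP=> /eqP E.
  - have qk : q k by rewrite /q /inc_edge ordS_ordn E.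
    by rewrite qk E E0 ordS_ordn addn1 addnS.
  - have qk : q k = false by rewrite /q /inc_edge ordS_ordn E ordS_neq1.
    by rewrite qk addn0 E E0.
by move=> u; rewrite -{1}(ordn_val m0 u) key.
Qed.

End Homs2.


Lemma in_pathE m (a u : 'I_m) l :
  in_path a l u = ((a <= u) && (u - a < l)) || ((u < a) && (u + m - a < l)).
Proof.
have ha := ltn_ord a; have hu := ltn_ord u.
rewrite /in_path; case: (leqP a u) => h /=.
  have -> : u + m - a = (u - a) + m by lia.
  by rewrite modnDr modn_small //; lia.
by rewrite modn_small //; lia.
Qed.

Lemma edge_in_pathE m (a u : 'I_m) l :
  edge_in_path a l u = ((a <= u) && (u - a < l.-1)) || ((u < a) && (u + m - a < l.-1)).
Proof.
have ha := ltn_ord a; have hu := ltn_ord u.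
rewrite /edge_in_path; case: (leqP a u) => h /=.
  have -> : u + m - a = (u - a) + m by lia.
  by rewrite modnDr modn_small //; lia.
by rewrite modn_small //; lia.
Qed.

Lemma Ynth n (ys : n.-tuple orient) i j : 0 < n -> i <= n -> j < n ->
  nth Sym (rcons (shift i ys) (nth Sym ys (i %% n))) j = nth Sym ys ((i + j) %% n).
Proof.
move=> n0 hi hj; rewrite nth_rcons size_rot size_tuple hj /shift nth_rot_mod ?size_tuple //.
Qed.

Lemma Ynth_last n (ys : n.-tuple orient) i :
  nth Sym (rcons (shift i ys) (nth Sym ys (i %% n))) n = nth Sym ys (i %% n).
Proof. by rewrite nth_rcons size_rot size_tuple ltnn eqxx. Qed.

Lemma sizeY n (ys : n.-tuple orient) i :
  size (rcons (shift i ys) (nth Sym ys (i %% n))) = n.+1.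
Proof. by rewrite size_rcons size_rot size_tuple. Qed.


Theorem fact3p6 (m n : nat) (xs : m.-tuple orient) (ys : n.-tuple orient)
    (i : nat) (Phi : 'I_m -> 'I_n) :
  3 <= m ->
  noncontractible ys ->
  1 <= i <= n ->
  is_max_Mon1 xs ys i Phi ->
  ((exists phi' : 'I_m -> 'I_n,
      Mon1 xs ys i.+1 phi' /\ one_step_up xs ys Phi phi')
   <-> star_le (rcons (shift i ys) (nth Sym ys (i %% n))) xs).
Proof.
move=> m3 [n3 _] hi [hPhi hmax].
have m0 : 0 < m by lia.
have n0 : 0 < n by lia.
have [tot PhiE] := from_mon m0 n3 n0 hPhi.
set q := fun k => inc_edge Phi (ordn m0 k) in tot PhiE.
have [[homP _ incstP] startP] := hPhi.
set A := filter q (iota 0 m).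
have Afacts : forall j, j < n -> [/\ q (nth 0 A j), nth 0 A j < m & cnt q (nth 0 A j) = j].
  move=> j hj; have hj' : j < count q (iota 0 m) by rewrite -/(cnt q m) tot.
  have [h1 h2] := nth_filter_mem hj'.
  by split=> //; apply: cnt_nth.
have valo : forall k, k < m -> nat_of_ord (ordn m0 k) = k by move=> k hk; rewrite /= modn_small.
have PhiV : forall u : 'I_m, nat_of_ord (Phi u) = (i + cnt q u) %% n by move=> u; rewrite PhiE.
set u0 := ordn m0 0.
have vu0 : nat_of_ord u0 = 0 by rewrite /= mod0n.
split.
- move=> [phi' [hphi' [_ [monphi' [a [l [d [hl hstat hd hd' hoff]]]]]]]].
  have [[homp' _ incstp'] startp'] := hphi'.
  have S0 : in_path a l u0.
    apply/negPn/negP => H; have := hoff _ H => E.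
    have := startp' u0 vu0; rewrite E (startP u0 vu0) => /eqP.
    by rewrite eq_sym -addn1 modn_neq //; lia.
  have dE : Phi u0 = d := hd _ S0.
  have ha := ltn_ord a.
  set e0 := ordn m0 (a + m - 1).
  have ve0 : ((a : nat) = 0 /\ (e0 : nat) = m - 1) \/ (0 < a /\ (e0 : nat) = a - 1).
    rewrite /=; case: (posnP a) => h; [left|right]; split => //.
      by rewrite h add0n modn_small //; lia.
    have -> : a + m - 1 = (a - 1) + m by lia.
    by rewrite modnDr modn_small //; lia.
  have Se0 : ordS e0 = a.
    rewrite ordS_ordn; apply: val_inj => /=.
    have -> : (a + m - 1).+1 = a + m by lia.
    by rewrite modnDr modn_small.
  move: S0; rewrite in_pathE vu0 => S0.
  have K1 : forall e : 'I_m, nat_of_ord e0 < e -> edge_in_path a l e.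
    move=> e he; have := ltn_ord e; rewrite edge_in_pathE; lia.
  have statP : forall e : 'I_m, edge_in_path a l e -> ~~ q e.
    move=> e /hstat st; rewrite /q ordn_val; apply/negP => ie.
    exact: (incstat_excl m0 n3 n0 ie st).
  have incP : forall j, j < n -> inc_edge Phi (ordn m0 (nth 0 A j)) by move=> j /Afacts[].
  have K2 : l < m.
    rewrite ltnNge; apply/negP => hlm; have el : l = m by lia.
    have Kall : forall e : 'I_m, nat_of_ord e != nat_of_ord e0 -> edge_in_path a l e.
      move=> e he; have := ltn_ord e; rewrite edge_in_pathE el; lia.
    have [qa0 am a0] := Afacts 0 n0.
    have [qa1 am1 a1] := Afacts 1 (ltn_trans (isT : 1 < 2) n3).
    have e1 : nth 0 A 0 = nat_of_ord e0.
      apply/eqP/negPn/negP => h.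
      have hK : nat_of_ord (ordn m0 (nth 0 A 0)) != nat_of_ord e0 by rewrite valo.
      by have := statP _ (Kall _ hK); rewrite valo // qa0.
    have e2 : nth 0 A 1 = nat_of_ord e0.
      apply/eqP/negPn/negP => h.
      have hK : nat_of_ord (ordn m0 (nth 0 A 1)) != nat_of_ord e0 by rewrite valo.
      by have := statP _ (Kall _ hK); rewrite valo // qa1.
    by move: a0 a1; rewrite e1 e2 => ->.
  have K3 : ~~ in_path a l e0.
    rewrite in_pathE; have := ltn_ord e0; lia.
  have K4 : in_path a l a by rewrite in_pathE leqnn subnn; lia.
  have pe0 : phi' e0 = Phi e0 := hoff _ K3.
  have Pa : Phi a = d := hd _ K4.
  have pa : phi' a = ordS d := hd' _ K4.
  have [K5 K5' K5''] : [/\ Phi e0 = d, ~~ inc_edge Phi e0 & inc_edge phi' e0].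
    have hP := incstP e0; have hp := incstp' e0.
    move: hP hp; rewrite /inc_edge /stat_edge Se0 Pa pa pe0.
    case/orP=> /eqP E.
      rewrite E => /orP[/eqP/ordS_inj E2|/eqP E2].
        by move: (ordS_neq1 m0 n3 n0 (Phi e0)); rewrite E2 eqxx.
      by move: (ordS_neq2 n3 n0 (Phi e0)); rewrite E2 eqxx.
    rewrite -E => /orP[/eqP E2|/eqP E2]; last first.
      by move: (ordS_neq1 m0 n3 n0 d); rewrite E2 eqxx.
    by split; [by [] | by rewrite (ordS_neq1 m0 n3 n0 d) | by rewrite eqxx].
  have K6 : forall e : 'I_m, inc_edge Phi e -> nat_of_ord e < nat_of_ord e0.
    move=> e ie; rewrite ltn_neqAle; apply/andP; split.
      by apply/negP => /eqP/val_inj ee; move: K5'; rewrite -ee ie.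
    rewrite leqNgt; apply/negP => /K1 /statP; rewrite /q ordn_val ie //.
  exists (fun j => if j < n then nth 0 A j else nat_of_ord e0).
  rewrite sizeY; split.
  + move=> j1 j2 /andP[h12 h2].
    have h1 : j1 < n by lia.
    rewrite h1; case: ifP => h2n.
      rewrite ltnNge; apply/negP => hle; have := cnt_mono q hle.
      by have [_ _ ->] := Afacts _ h1; have [_ _ ->] := Afacts _ h2n; lia.
    have := K6 _ (incP _ h1); rewrite valo //; by have [_ ? _] := Afacts _ h1.
  + move=> j hj; rewrite size_tuple; case: ifP => h; first by have [_ ? _] := Afacts _ h.
    exact: ltn_ord.
  + move=> j hj; apply: compat_star; case: ifP => h.
      rewrite Ynth //; last lia.
      have := edge_of_hom m0 n3 n0 homP (incP _ h).
      have [_ hA cA] := Afacts _ h.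
      by rewrite PhiV valo // cA.
    have -> : j = n by lia.
    rewrite Ynth_last.
    have := edge_of_hom m0 n3 n0 homp' K5''.
    by rewrite pe0 K5 -dE (startP u0 vu0).
- set Y := rcons (shift i ys) (nth Sym ys (i %% n)).
  move=> [be [mono bnd cmp]].
  rewrite /Y sizeY size_tuple in mono bnd cmp.
  have cbj : forall j, j < n -> compat (nth Sym xs (be j)) (nth Sym ys ((i + j) %% n)).
    move=> j hj; rewrite -(Ynth ys n0 _ hj); last lia.
    by apply: star_compat; apply: cmp; lia.
  have cbn : compat (nth Sym xs (be n)) (nth Sym ys (i %% n)).
    by rewrite -(Ynth_last ys i); apply: star_compat; apply: cmp.
  set qb := fun k => k \in map be (iota 0 n).
  have Ab : filter qb (iota 0 m) = map be (iota 0 n).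
    apply: (irr_sorted_eq ltn_trans ltnn).
    - exact: (sorted_filter ltn_trans _ (iota_ltn_sorted 0 m)).
    - apply: (@homo_sorted_in _ _ [pred j | j < n.+1] be ltn ltn).
      + by move=> x y; rewrite !inE => hx hy hxy; apply: mono; lia.
      + by apply/allP => x; rewrite mem_iota !inE; lia.
      + exact: iota_ltn_sorted.
    - move=> k; rewrite mem_filter mem_iota /qb; apply/andP/idP => [[//]|h]; split => //.
      move/mapP: h => [j]; rewrite mem_iota => /andP[_ hj] ->; have := bnd j; lia.
  have sizeAb : cnt qb m = n by rewrite /cnt -size_filter Ab size_map size_iota.
  have nthAb : forall j, j < n -> nth 0 (filter qb (iota 0 m)) j = be j.
    by move=> j hj; rewrite Ab (nth_map 0) ?size_iota // nth_iota.
  have cntb : forall j, j < n -> cnt qb (be j) = j.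
    by move=> j hj; rewrite -{1}(nthAb j hj) cnt_nth // -/(cnt qb m) sizeAb.
  have condb : forall e, e < m -> qb e ->
      compat (nth Sym xs e) (nth Sym ys ((i + cnt qb e) %% n)).
    move=> e he /mapP[j]; rewrite mem_iota => /andP[_ hj] ->; rewrite cntb //; exact: cbj.
  have [hMb incb] := build m0 n3 n0 sizeAb condb.
  set phib := fun u : 'I_m => _ in hMb incb.
  have ltn_pred : forall k, 0 < k -> k.-1 < k by move=> k hk; lia.
  have hge := hmax _ hMb n.-1 (ltn_pred _ n0).
  rewrite !(alphaE m0) in hge.
  have fb : filter (fun k => inc_edge phib (ordn m0 k)) (iota 0 m) = filter qb (iota 0 m).
    by apply: eq_in_filter => k; rewrite mem_iota => /andP[_ hk]; rewrite incb valo.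
  rewrite fb Ab -/A in hge.
  have sA : size A = n by rewrite size_filter -/(cnt q m) tot.
  rewrite (nth_map 0) ?sA ?(ltn_pred _ n0) // (nth_map 0) ?size_map ?size_iota ?(ltn_pred _ n0) //
     (nth_map 0) ?size_iota ?(ltn_pred _ n0) // nth_iota ?(ltn_pred _ n0) // add0n in hge.
  have hbb : be n.-1 < be n by apply: mono; lia.
  have kkm : be n < m by apply: bnd.
  have [qA0 A0m cA0] := Afacts 0 n0.
  have [qL Lm cL] := Afacts n.-1 (ltn_pred _ n0).
  set A0 := nth 0 A 0 in qA0 A0m cA0.
  set L := nth 0 A n.-1 in qL Lm cL hge.
  set kk := be n in hbb kkm cbn.
  have F1 : forall u, u <= A0 -> cnt q u = 0.
    by move=> u hu; have := cnt_mono q hu; lia.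
  have F2 : forall u, A0 < u -> 0 < cnt q u.
    move=> u hu; have := cnt_mono q hu; rewrite cntS; lia.
  have F3 : forall u, L < u <= m -> cnt q u = n.
    move=> u /andP[hu1 hu2]; have := cnt_mono q hu1; have := cnt_mono q hu2.
    rewrite cntS; lia.
  have F4 : forall e, L < e < m -> q e = false.
    move=> e he; have := F3 e; have := F3 e.+1; rewrite cntS; lia.
  have F5 : forall e, e < A0 -> q e = false.
    move=> e he; have := F1 e.+1; rewrite cntS; lia.
  have AL : A0 <= L by have := F1 L; lia.
  set q' := fun k => (q k && (k != A0)) || (k == kk).
  have cnt' : forall e, e <= m -> cnt q' e = cnt q e - (A0 < e) + (kk < e).
    elim=> [|e IH] he; first by rewrite /cnt /=; lia.
    rewrite !cntS IH; last lia.
    rewrite /q'; have := F4 e; have := F5 e; have := F2 e.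
    case: (eqVneq e A0) => [->|neA]; lia.
  have tot' : cnt q' m = n by rewrite cnt' //; lia.
  have qE : forall e : 'I_m, q e = inc_edge Phi e by move=> e; rewrite /q ordn_val.
  have cond' : forall e, e < m -> q' e ->
      compat (nth Sym xs e) (nth Sym ys ((i.+1 + cnt q' e) %% n)).
    move=> e he qe; move: qe; rewrite /q' => /orP[/andP[qe ne]|/eqP ->].
    - have hA0 : A0 < e by have := F5 e; lia.
      have hLe : e <= L by have := F4 e; lia.
      have -> : (i.+1 + cnt q' e) %% n = (i + cnt q e) %% n.
        by rewrite cnt' ?(ltnW he) //; have := F2 e hA0 => h2; congr (_ %% _); lia.
      have := edge_of_hom m0 n3 n0 homP qe.
      by rewrite valo // PhiV valo.
    - have -> : (i.+1 + cnt q' kk) %% n = i %% n.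
        rewrite cnt' ?(ltnW kkm) // F3; last lia.
        have -> : i.+1 + (n - (A0 < kk) + (kk < kk)) = i + n by lia.
        by rewrite modnDr.
      exact: cbn.
  have [hM' incq'] := build m0 n3 n0 tot' cond'.
  set phi' := fun u : 'I_m => _ in hM' incq'.
  exists phi'; split => //; split; first exact: hPhi.1.
  split; first exact: hM'.1.
  set a := ordn m0 kk.+1.
  have va : (kk.+1 < m /\ (a : nat) = kk.+1) \/ (kk.+1 = m /\ (a : nat) = 0).
    rewrite /=; case: (ltnP kk.+1 m) => h; [left|right].
      by rewrite modn_small.
    have e : kk.+1 = m by lia.
    by rewrite e modnn.
  have hA0k : A0 < kk by lia.
  exists a, (m - kk + A0), (ordn n0 i); split.
  + lia.
  + move=> e; rewrite edge_in_pathE => he.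
    have qf : q e = false by have := F4 e; have := F5 e; have := ltn_ord e; lia.
    by have := incstP e; rewrite -qE qf.
  + move=> u; rewrite in_pathE => hu; rewrite PhiE.
    have [->|->] : cnt q u = 0 \/ cnt q u = n.
      by have := F1 u; have := F3 u; have := ltn_ord u; lia.
      by rewrite addn0.
    by rewrite ordnDr.
  + move=> u; rewrite in_pathE => hu; rewrite ordS_ordn /phi' cnt' ?(ltnW (ltn_ord u)) //.
    have [->|->] : cnt q u - (A0 < u) + (kk < u) = 0 \/ cnt q u - (A0 < u) + (kk < u) = n.
      by have := F1 u; have := F3 u; have := ltn_ord u; lia.
      by rewrite addn0.
    by rewrite ordnDr.
  + move=> u; rewrite in_pathE => hu; rewrite PhiE /phi' cnt' ?(ltnW (ltn_ord u)) //.
    congr ordn; have := F2 u; have := F3 u; have := ltn_ord u; lia.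
Qed.
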